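(* Let $T$ be an Aronszajn tree and let $A\subseteq T$ be an uncountable antichain. Then there is an infinite chain $C\subseteq T$ such that every element of $C$ is the meet $a\wedge b$ of two distinct elements $a,b\in A$.
   Context: Trees are taken to be subsets $T\subseteq{}^{<\omega_1}\omega$ (functions from countable ordinals to $\omega$) that are closed under initial segments, ordered by $s<_T t$ iff $t$ properly extends $s$. Such a $T$ is an Aronszajn tree if it is uncountable, each level (set of elements with a given domain) is countable, and it has no uncountable chain (branch). For $s,t\in T$ the meet $s\wedge t$ is the longest common initial segment of $s$ and $t$ (an element of $T$). An antichain is a set of pairwise $<_T$-incomparable elements; a chain is a set of pairwise comparable elements. *)

(* Defs.v *)
(* Trees are subsets of ^{<omega_1} omega. *)
From Stdlib Require Import List.

(* omega_1 is presented abstractly as a type O with a strict order lt that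
   is a well-order, uncountable, and all of whose proper initial segments are
   countable; this characterizes omega_1 up to isomorphism. *)

Definition countable_type (X : Type) : Prop :=
  exists f : X -> nat, forall x y, f x = f y -> x = y.

Definition is_omega1 (O : Type) (lt : O -> O -> Prop) : Prop :=
  (forall a, ~ lt a a) /\
  (forall a b c, lt a b -> lt b c -> lt a c) /\
  (forall a b, lt a b \/ a = b \/ lt b a) /\
  well_founded lt /\
  ~ countable_type O /\
  (forall a, exists f : O -> nat,
      forall x y, lt x a -> lt y a -> f x = f y -> x = y).

Section Trees.
Variable O : Type.
Variable lt : O -> O -> Prop.

(* A node (alpha, s) stands for the function s restricted to
   {beta | beta < alpha}; it is normalized when s is 0 outside its domain,
   so that Leibniz equality of normalized nodes is equality of functions. *)
Definition node : Type := (O * (O -> nat))%type.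

Definition dom (s : node) : O := fst s.

Definition normalized (s : node) : Prop :=
  forall b, ~ lt b (fst s) -> snd s b = 0.

Definition node_lt (s t : node) : Prop :=
  lt (fst s) (fst t) /\ forall b, lt b (fst s) -> snd s b = snd t b.

Definition node_le (s t : node) : Prop := s = t \/ node_lt s t.

Definition countable (P : node -> Prop) : Prop :=
  exists f : node -> nat, forall x y, P x -> P y -> f x = f y -> x = y.

Definition uncountable (P : node -> Prop) : Prop := ~ countable P.

Definition infinite (P : node -> Prop) : Prop :=
  forall l : list node, exists x, P x /\ ~ In x l.

Definition subset (P Q : node -> Prop) : Prop := forall x, P x -> Q x.

Definition is_chain (C : node -> Prop) : Prop :=
  forall x y, C x -> C y -> x = y \/ node_lt x y \/ node_lt y x.

Definition is_antichain (A : node -> Prop) : Prop :=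
  forall x y, A x -> A y -> x <> y -> ~ node_lt x y /\ ~ node_lt y x.

Definition is_tree (T : node -> Prop) : Prop :=
  (forall s, T s -> normalized s) /\
  (forall s t, normalized s -> node_lt s t -> T t -> T s).

Definition level (T : node -> Prop) (a : O) : node -> Prop :=
  fun s => T s /\ fst s = a.

Definition aronszajn (T : node -> Prop) : Prop :=
  is_tree T /\ uncountable T /\ (forall a, countable (level T a)) /\
  (forall B, subset B T -> is_chain B -> countable B).

Definition is_meet (s t m : node) : Prop :=
  normalized m /\ node_le m s /\ node_le m t /\
  (forall u, normalized u -> node_le u s -> node_le u t -> node_le u m).

End Trees.
Arguments node : clear implicits.

(* Main.v *)
Require Import Defs.
From Stdlib Require Import List Arith Cantor Lia FinFun Classical ClassicalEpsilon FunctionalExtensionality.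

Definition cnt {Z : Type} (R : Z -> Prop) : Prop :=
  exists f : Z -> nat, forall x y, R x -> R y -> f x = f y -> x = y.

Lemma cnt_sub {Z} (R R' : Z -> Prop) : (forall x, R x -> R' x) -> cnt R' -> cnt R.
Proof. intros H [f Hf]. exists f. intros x y Hx Hy. apply Hf; auto. Qed.

Lemma cnt_empty {Z} (R : Z -> Prop) : ~ (exists x, R x) -> cnt R.
Proof. intros H. exists (fun _ => 0). intros x y Hx. exfalso; eauto. Qed.

Lemma cunion {X Y : Type} (P : Y -> Prop) (k : Y -> X) (Q : X -> Prop) :
  (forall y, P y -> Q (k y)) -> cnt Q ->
  (forall x, Q x -> cnt (fun y => P y /\ k y = x)) -> cnt P.
Proof.
  intros HPQ [g Hg] Hf.
  assert (H : forall x, exists f : Y -> nat, Q x ->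
      forall y1 y2, (P y1 /\ k y1 = x) -> (P y2 /\ k y2 = x) -> f y1 = f y2 -> y1 = y2).
  { intros x. destruct (classic (Q x)) as [Hq|Hq].
    - destruct (Hf x Hq) as [f Hf']. exists f. intros _. exact Hf'.
    - exists (fun _ => 0). intros Hq'; contradiction. }
  pose (F := fun x => proj1_sig (constructive_indefinite_description _ (H x))).
  assert (HF : forall x, Q x -> forall y1 y2, (P y1 /\ k y1 = x) -> (P y2 /\ k y2 = x) -> F x y1 = F x y2 -> y1 = y2).
  { intros x. exact (proj2_sig (constructive_indefinite_description _ (H x))). }
  exists (fun y => to_nat (g (k y), F (k y) y)).
  intros y1 y2 H1 H2 He.
  apply (f_equal of_nat) in He. rewrite !cancel_of_to in He. injection He as E1 E2.
  assert (Ek : k y1 = k y2) by (apply Hg; auto).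
  rewrite Ek in E2.
  apply (HF (k y2)); auto.
Qed.

Lemma wf_min {X} (R : X -> X -> Prop) (wf : well_founded R) (P : X -> Prop) x :
  P x -> exists m, P m /\ forall y, P y -> ~ R y m.
Proof.
  intros Hx. apply NNPP. intros Hn.
  assert (Hall : forall z, ~ P z).
  { intro z. induction z as [z IH] using (well_founded_ind wf).
    intros Pz. apply Hn. exists z. split; auto. intros y Py Ry. exact (IH y Ry Py). }
  exact (Hall x Hx).
Qed.

Definition ltrans {O} (lt : O -> O -> Prop) := forall a b c, lt a b -> lt b c -> lt a c.
Definition ltri {O} (lt : O -> O -> Prop) := forall a b, lt a b \/ a = b \/ lt b a.
Definition lirr {O} (lt : O -> O -> Prop) := forall a, ~ lt a a.

Lemma node_ext O lt (x y : node O) : normalized O lt x -> normalized O lt y ->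
  fst x = fst y -> (forall b, lt b (fst x) -> snd x b = snd y b) -> x = y.
Proof.
  destruct x as [dx sx], y as [dy sy]; unfold normalized; simpl.
  intros Nx Ny E H. subst dy. f_equal. apply functional_extensionality. intro b.
  destruct (classic (lt b dx)) as [Hb|Hb]; auto. rewrite Nx, Ny; auto.
Qed.

Lemma nle_info O lt (x z : node O) : node_le O lt x z ->
  (fst x = fst z \/ lt (fst x) (fst z)) /\ forall b, lt b (fst x) -> snd x b = snd z b.
Proof.
  intros [E|[H1 H2]]; [subst; auto | auto].
Qed.

Lemma nlt_trans O lt (Ht : ltrans lt) x y z :
  node_lt O lt x y -> node_lt O lt y z -> node_lt O lt x z.
Proof.
  intros [H1 H2] [H3 H4]. split. eauto. intros b Hb. rewrite H2 by auto. apply H4. eauto.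
Qed.

Lemma nlt_le_trans O lt (Ht : ltrans lt) x y z :
  node_lt O lt x y -> node_le O lt y z -> node_lt O lt x z.
Proof. intros H [E|H']. subst; auto. eapply nlt_trans; eauto. Qed.

Lemma nle_trans O lt (Ht : ltrans lt) x y z :
  node_le O lt x y -> node_le O lt y z -> node_le O lt x z.
Proof. intros [E|H] H'. subst; auto. right. eapply nlt_le_trans; eauto. Qed.

Lemma nlt_irr O lt (Hi : lirr lt) x : ~ node_lt O lt x x.
Proof. intros [H _]. exact (Hi _ H). Qed.

Lemma comparable_below O lt (Ht : ltrans lt) (Hr : ltri lt) x y z :
  normalized O lt x -> normalized O lt y -> node_le O lt x z -> node_le O lt y z ->
  x = y \/ node_lt O lt x y \/ node_lt O lt y x.
Proof.
  intros Nx Ny Hx Hy. apply nle_info in Hx as [Dx Vx]. apply nle_info in Hy as [Dy Vy].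
  destruct (Hr (fst x) (fst y)) as [L|[E|L]].
  - right; left. split; auto. intros b Hb. rewrite Vx by auto. rewrite Vy; eauto.
  - left. apply (node_ext O lt); auto. intros b Hb. rewrite Vx by auto. rewrite Vy; auto. congruence.
  - right; right. split; auto. intros b Hb. rewrite Vy by auto. rewrite Vx; eauto.
Qed.

Lemma tree_down O lt T (HT : is_tree O lt T) x y : normalized O lt x -> node_le O lt x y -> T y -> T x.
Proof.
  intros Nx [E|H] Ty. subst; auto. destruct HT as [HN HC]. eapply HC; eauto.
Qed.

Definition restr {O} (lt : O -> O -> Prop) (d : O) (s : node O) : node O :=
  (d, fun b => if excluded_middle_informative (lt b d) then snd s b else 0).

Lemma restr_norm (O : Type) (lt : O -> O -> Prop) d s : normalized O lt (restr lt d s).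
Proof.
  intros b Hb. simpl in *. destruct (excluded_middle_informative (lt b d)); tauto.
Qed.

Lemma restr_val (O : Type) (lt : O -> O -> Prop) d s b : lt b d -> snd (restr lt d s) b = snd s b.
Proof. intros H. simpl. destruct (excluded_middle_informative (lt b d)); tauto. Qed.

Lemma restr_le (O : Type) (lt : O -> O -> Prop) (Hr : ltri lt) d a : normalized O lt a -> ~ lt (fst a) d ->
  node_le O lt (restr lt d a) a.
Proof.
  intros Na H. destruct (Hr d (fst a)) as [L|[E|L]].
  - right. split; simpl; auto. intros b Hb. apply restr_val; auto.
  - left. apply (node_ext O lt); auto. apply restr_norm. intros b Hb. apply restr_val; auto.
  - contradiction.
Qed.

Lemma meet_ex (O : Type) (lt : O -> O -> Prop) (wf : well_founded lt) (Ht : ltrans lt) (Hr : ltri lt) (Hi : lirr lt)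
  a b : normalized O lt a -> normalized O lt b -> exists m, is_meet O lt a b m.
Proof.
  intros Na Nb.
  pose (E := fun x => ~ (lt x (fst a) /\ lt x (fst b) /\ snd a x = snd b x)).
  assert (Ea : E (fst a)) by (intros [H _]; exact (Hi _ H)).
  destruct (wf_min lt wf E _ Ea) as [d [Ed Hd]].
  assert (Hbelow : forall x, lt x d -> lt x (fst a) /\ lt x (fst b) /\ snd a x = snd b x).
  { intros x Hx. apply NNPP. intro Hn. exact (Hd x Hn Hx). }
  assert (Nad : ~ lt (fst a) d) by (intros H; destruct (Hbelow _ H) as [H1 _]; exact (Hi _ H1)).
  assert (Nbd : ~ lt (fst b) d) by (intros H; destruct (Hbelow _ H) as [_ [H1 _]]; exact (Hi _ H1)).
  assert (Rab : restr lt d a = restr lt d b).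
  { apply (node_ext O lt); try apply restr_norm; auto. intros x Hx. simpl in Hx.
    rewrite !restr_val by auto. apply Hbelow; auto. }
  exists (restr lt d a). split; [apply restr_norm|]. split; [apply restr_le; auto|].
  split; [rewrite Rab; apply restr_le; auto|].
  intros u Nu Hua Hub.
  apply nle_info in Hua as [Dua Vua]. apply nle_info in Hub as [Dub Vub].
  destruct (Hr d (fst u)) as [L|[Eq|L]].
  - exfalso. apply Ed. split; [|split].
    + destruct Dua as [Q|Q]; [rewrite <- Q|]; eauto.
    + destruct Dub as [Q|Q]; [rewrite <- Q|]; eauto.
    + rewrite <- Vua, <- Vub; auto.
  - left. apply (node_ext O lt); [auto|apply restr_norm|simpl; congruence|].
    intros x Hx. rewrite restr_val by congruence. auto.
  - right. split; [simpl; auto|]. intros x Hx. rewrite restr_val by eauto. auto.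
Qed.

Lemma bound (O : Type) (lt : O -> O -> Prop) (HO : is_omega1 O lt) (S : node O -> Prop) :
  cnt S -> exists d, forall s, S s -> lt (fst s) d.
Proof.
  intros HS. destruct HO as [Hi [Ht [Hr [wf [Hunc Hseg]]]]].
  apply NNPP. intros Hn.
  assert (H : forall d, exists s, S s /\ ~ lt (fst s) d).
  { intros d. apply NNPP. intros Hn2. apply Hn. exists d. intros s Ss.
    apply NNPP. intros Hl. apply Hn2. eauto. }
  pose (k := fun d => proj1_sig (constructive_indefinite_description _ (H d))).
  assert (Hk : forall d, S (k d) /\ ~ lt (fst (k d)) d).
  { intros d. exact (proj2_sig (constructive_indefinite_description _ (H d))). }
  assert (C : cnt (fun _ : O => True)).
  { apply (cunion _ k S).
    - intros d _. apply Hk.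
    - exact HS.
    - intros s Ss. destruct (Hseg (fst s)) as [f Hf].
      exists (fun d => if excluded_middle_informative (d = fst s) then 0 else Nat.succ (f d)).
      intros d1 d2 [_ K1] [_ K2].
      assert (L1 : d1 = fst s \/ lt d1 (fst s)).
      { destruct (Hk d1) as [_ N]. rewrite K1 in N. destruct (Hr d1 (fst s)) as [?|[?|?]]; tauto. }
      assert (L2 : d2 = fst s \/ lt d2 (fst s)).
      { destruct (Hk d2) as [_ N]. rewrite K2 in N. destruct (Hr d2 (fst s)) as [?|[?|?]]; tauto. }
      destruct (excluded_middle_informative (d1 = fst s)) as [E1|E1];
      destruct (excluded_middle_informative (d2 = fst s)) as [E2|E2]; intros Heq.
      + congruence.
      + discriminate.
      + discriminate.
      + injection Heq as Heq. apply Hf; tauto. }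
  apply Hunc. destruct C as [f Hf]. exists f. intros x y. apply Hf; auto.
Qed.

Lemma key (O : Type) (lt : O -> O -> Prop) (HO : is_omega1 O lt) (T : node O -> Prop)
  (HT : aronszajn O lt T) (B : node O -> Prop) :
  subset O B T -> uncountable O B ->
  exists u v, normalized O lt u /\ normalized O lt v /\
    ~ (u = v \/ node_lt O lt u v \/ node_lt O lt v u) /\
    uncountable O (fun x => B x /\ node_le O lt u x) /\
    uncountable O (fun x => B x /\ node_le O lt v x).
Proof.
  intros HBT HB. pose proof HO as HO'. destruct HO' as [Hi [Ht [Hr [wf [Hunc Hseg]]]]].
  destruct HT as [Htree [_ [Hlev Hch]]]. pose proof Htree as [HN HC].
  apply NNPP. intros Hn.
  pose (S := fun x => T x /\ uncountable O (fun y => B y /\ node_le O lt x y)).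
  assert (HS : cnt S).
  { apply Hch. intros x [Tx _]; auto.
    intros x y [Tx Ux] [Ty Uy]. apply NNPP. intros Hc. apply Hn. exists x, y. auto 6. }
  destruct (bound O lt HO S HS) as [d Hd].
  apply HB.
  apply (cunion B (fun a => if excluded_middle_informative (lt (fst a) d) then true else false)
    (fun _ => True)).
  - auto.
  - exists (fun b : bool => if b then 0 else 1). intros [|] [|] _ _ E; auto; discriminate.
  - intros bo _. destruct bo.
    + apply cnt_sub with (R' := fun y => B y /\ lt (fst y) d).
      { intros y [By E]. destruct (excluded_middle_informative (lt (fst y) d)); [auto|discriminate]. }
      apply (cunion _ (@fst O (O -> nat)) (fun a => lt a d)).
      * intros y [_ L]; auto.
      * apply Hseg.
      * intros a _. apply cnt_sub with (R' := level O T a).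
        { intros y [[By _] E]. split; auto. }
        apply Hlev.
    + apply cnt_sub with (R' := fun y => B y /\ ~ lt (fst y) d).
      { intros y [By E]. destruct (excluded_middle_informative (lt (fst y) d)); [discriminate|auto]. }
      apply (cunion _ (restr lt d) (level O T d)).
      * intros y [By L]. split; [|reflexivity].
        apply (tree_down O lt T Htree _ y); auto. apply restr_norm. apply restr_le; auto.
      * apply Hlev.
      * intros r [Tr Dr]. apply cnt_sub with (R' := fun y => B y /\ node_le O lt r y).
        { intros y [[By L] E]. split; auto. rewrite <- E. apply restr_le; auto. }
        apply NNPP. intros Hu. assert (Sr : S r) by (split; auto).
        apply Hd in Sr. rewrite Dr in Sr. exact (Hi _ Sr).
Qed.

Definition good_step (O : Type) (lt : O -> O -> Prop) (T A B : node O -> Prop)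
  (p : node O * node O) : Prop :=
  T (fst p) /\ normalized O lt (snd p) /\ node_lt O lt (fst p) (snd p) /\
  uncountable O (fun x => B x /\ node_le O lt (snd p) x) /\
  exists a b, B a /\ B b /\ a <> b /\ is_meet O lt a b (fst p).

Lemma step_ex (O : Type) (lt : O -> O -> Prop) (HO : is_omega1 O lt) (T : node O -> Prop)
  (HT : aronszajn O lt T) (A B : node O -> Prop) (HAT : subset O A T) :
  subset O B A -> uncountable O B -> exists p, good_step O lt T A B p.
Proof.
  intros HBA HB. pose proof HO as [Hi [Ht [Hr [wf _]]]].
  pose proof HT as [Htree _]. pose proof Htree as [HN HC].
  destruct (key O lt HO T HT B) as [u [v [Nu [Nv [Inc [Uu Uv]]]]]].
  { intros x Bx. auto. } { auto. }
  assert (Ea : exists a, B a /\ node_le O lt u a).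
  { apply NNPP. intros Hn. apply Uu. apply cnt_empty. exact Hn. }
  assert (Eb : exists b, B b /\ node_le O lt v b).
  { apply NNPP. intros Hn. apply Uv. apply cnt_empty. exact Hn. }
  destruct Ea as [a [Ba Ua]], Eb as [b [Bb Vb]].
  assert (Ta : T a) by auto. assert (Tb : T b) by auto.
  destruct (meet_ex O lt wf Ht Hr Hi a b) as [c Mc]; auto.
  pose proof Mc as [Nc [Ca [Cb Cmax]]].
  exists (c, u). unfold good_step; simpl.
  split; [apply (tree_down O lt T Htree c a); auto|].
  split; [auto|].
  split.
  { destruct (comparable_below O lt Ht Hr c u a) as [E|[L|L]]; auto.
    - subst c. exfalso. apply Inc. apply (comparable_below O lt Ht Hr u v b); auto.
    - exfalso. apply Inc. apply (comparable_below O lt Ht Hr u v b); auto.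
      apply (nle_trans O lt Ht u c b); auto. right; auto. }
  split; [auto|].
  exists a, b. split; [auto|]. split; [auto|]. split; [|auto].
  intros E. subst b. apply Inc. apply (comparable_below O lt Ht Hr u v a); auto.
Qed.

Theorem lemma1 (O : Type) (lt : O -> O -> Prop) (HO : is_omega1 O lt)
  (T : node O -> Prop) (HT : aronszajn O lt T)
  (A : node O -> Prop) (HAT : subset O A T) (HA : is_antichain O lt A)
  (HAunc : uncountable O A) :
  exists C : node O -> Prop,
    subset O C T /\ is_chain O lt C /\ infinite O C /\
    (forall c, C c -> exists a b, A a /\ A b /\ a <> b /\ is_meet O lt a b c).
Proof.
  pose proof HO as [Hi [Ht [Hr [wf [Hunc _]]]]].
  destruct (classic (exists o : O, True)) as [[o _]|Hno].
  2:{ exfalso. apply Hunc. exists (fun _ => 0). intros x. exfalso. eauto. }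
  assert (Hst : forall B, exists p, (subset O B A /\ uncountable O B) -> good_step O lt T A B p).
  { intros B. destruct (classic (subset O B A /\ uncountable O B)) as [[H1 H2]|H].
    - destruct (step_ex O lt HO T HT A B HAT H1 H2) as [p Hp]. exists p. auto.
    - exists ((o, fun _ => 0), (o, fun _ => 0)). tauto. }
  pose (fs := fun B => proj1_sig (constructive_indefinite_description _ (Hst B))).
  assert (Hfs : forall B, subset O B A /\ uncountable O B -> good_step O lt T A B (fs B)).
  { intros B. exact (proj2_sig (constructive_indefinite_description _ (Hst B))). }
  pose (sB := fix g (n : nat) : node O -> Prop :=
    match n with 0 => A | Datatypes.S m => fun x => g m x /\ node_le O lt (snd (fs (g m))) x end).
  assert (Inv : forall n, subset O (sB n) A /\ uncountable O (sB n)).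
  { induction n.
    - split; [intros x Hx; exact Hx | exact HAunc].
    - split.
      + intros x [Hx _]. apply IHn. exact Hx.
      + destruct (Hfs _ IHn) as [_ [_ [_ [U _]]]]. exact U. }
  pose (c := fun n => fst (fs (sB n))).
  assert (Hg : forall n, good_step O lt T A (sB n) (fs (sB n))) by (intros n; apply Hfs, Inv).
  assert (Inc : forall n, node_lt O lt (c n) (c (Datatypes.S n))).
  { intros n. destruct (Hg n) as [_ [Nu [Lcu _]]].
    destruct (Hg (Datatypes.S n)) as [_ [_ [_ [_ [a [b [Ba [Bb [_ Mab]]]]]]]]].
    destruct Mab as [_ [_ [_ Mx]]]. destruct Ba as [_ Ua]. destruct Bb as [_ Ub].
    apply (nlt_le_trans O lt Ht _ (snd (fs (sB n)))); auto. }
  assert (Mono : forall m k, node_lt O lt (c m) (c (m + Datatypes.S k))).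
  { intros m k. induction k.
    - rewrite Nat.add_1_r. apply Inc.
    - eapply (nlt_trans O lt Ht); [exact IHk|]. replace (m + Datatypes.S (Datatypes.S k)) with (Datatypes.S (m + Datatypes.S k)) by lia. apply Inc. }
  assert (Lt : forall m n, m < n -> node_lt O lt (c m) (c n)).
  { intros m n H. replace n with (m + Datatypes.S (n - m - 1)) by lia. apply Mono. }
  assert (Inj : forall m n, c m = c n -> m = n).
  { intros m n E. destruct (Nat.lt_total m n) as [L|[L|L]]; auto; exfalso.
    - apply (nlt_irr O lt Hi (c n)). rewrite <- E at 1. auto.
    - apply (nlt_irr O lt Hi (c m)). rewrite E at 1. auto. }
  exists (fun x => exists n, x = c n).
  split; [|split; [|split]].
  - intros x [n ->]. destruct (Hg n) as [Tc _]. exact Tc.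
  - intros x y [n ->] [m ->]. destruct (Nat.lt_total n m) as [L|[L|L]]; auto.
  - intros l. apply NNPP. intros Hn.
    assert (Hin : forall n, In (c n) l).
    { intros n. apply NNPP. intros Hn2. apply Hn. exists (c n). split; eauto. }
    assert (ND : NoDup (map c (seq 0 (Datatypes.S (length l))))).
    { apply FinFun.Injective_map_NoDup. intros m n; apply Inj. apply seq_NoDup. }
    apply NoDup_incl_length with (l' := l) in ND.
    + rewrite length_map, length_seq in ND. lia.
    + intros x Hx. apply in_map_iff in Hx as [n [<- _]]. apply Hin.
  - intros x [n ->]. destruct (Hg n) as [_ [_ [_ [_ [a [b [Ba [Bb [Nab Mab]]]]]]]]].
    exists a, b. destruct (Inv n) as [Sub _]. auto.
Qed.
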